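(* Suppose the dataset $\{(\mathbf{x}_i,y_i)\}_{i=1}^m$ ($\mathbf{x}_i\in\mathbb{R}^d$) is sampled i.i.d. from some distribution. Then for any $\delta\in(0,1)$, with probability at least $1-\delta$ over the sample, the following holds: for any invertible $M\in\mathbb{R}^{d\times d}$ and linearly-invariant algorithm (or any orthogonal $M$ and orthogonally-invariant algorithm), conditioned on the algorithm's internal randomness, the matrices $W$ and $W_M$ returned on the original data and on the data transformed by $M$ respectively satisfy \[ \Pr_{\mathbf{x}}(W_M^\top M\mathbf{x}\ne W^\top\mathbf{x})\le\frac{d}{\delta(m+1)}, \] where $\mathbf{x}$ is a fresh sample from the same distribution.
   Context: An algorithm takes a dataset $\{(\mathbf{x}_i,y_i)\}_{i=1}^m$ and outputs a predictor $\mathbf{x}\mapsto f(W^\top\mathbf{x})$. It is orthogonally-invariant (resp. linearly-invariant) if for every orthogonal (resp. invertible) $M\in\mathbb{R}^{d\times d}$, when fed $\{(M\mathbf{x}_i,y_i)\}$ it returns $\mathbf{x}\mapsto f(W_M^\top\mathbf{x})$ with the same $f$ and $W_M^\top M\mathbf{x}_i=W^\top\mathbf{x}_i$ for all $i$ in the dataset (for randomized algorithms, conditioned on each realization of the internal randomness). *)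

(* Defs.v *)
From HB Require Import structures.
From mathcomp Require Import all_boot all_order all_algebra.
From mathcomp Require Import all_classical all_reals all_analysis.
Set Implicit Arguments. Unset Strict Implicit. Unset Printing Implicit Defensive.
Import Order.TTheory GRing.Theory Num.Theory.
Local Open Scope ring_scope.
Local Open Scope classical_set_scope.

(* A (possibly randomized) algorithm with internal randomness in Xi, taking a
   dataset of pairs (x_i, y_i) with x_i in R^d (column vectors) and outputting
   a predictor x |-> f (W^T x), represented by the pair (f, W) with
   W : 'M_(d,k) and f : 'cV_k -> Out. *)
Definition algorithm (R : ringType) (d k : nat) (Y Xi Out : Type) :=
  Xi -> seq ('cV[R]_d * Y) -> ('cV[R]_k -> Out) * 'M[R]_(d, k).

Definition transform_data (R : ringType) (d : nat) (Y : Type) (M : 'M[R]_d)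
  (S : seq ('cV[R]_d * Y)) : seq ('cV[R]_d * Y) :=
  [seq (M *m p.1, p.2) | p <- S].

Definition invariant_for (R : ringType) (d k : nat) (Y Xi Out : Type)
  (A : algorithm R d k Y Xi Out) (M : 'M[R]_d) : Prop :=
  forall (xi : Xi) (S : seq ('cV[R]_d * Y)),
    (A xi (transform_data M S)).1 = (A xi S).1 /\
    forall p, p \in map fst S ->
      (A xi (transform_data M S)).2^T *m (M *m p) = (A xi S).2^T *m p.

Definition orthogonal_mx (R : ringType) (d : nat) (M : 'M[R]_d) : Prop :=
  M^T *m M = 1%:M.

Definition orthogonally_invariant (R : comUnitRingType) (d k : nat)
  (Y Xi Out : Type) (A : algorithm R d k Y Xi Out) : Prop :=
  forall M : 'M[R]_d, orthogonal_mx M -> invariant_for A M.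

Definition linearly_invariant (R : comUnitRingType) (d k : nat)
  (Y Xi Out : Type) (A : algorithm R d k Y Xi Out) : Prop :=
  forall M : 'M[R]_d, M \in unitmx -> invariant_for A M.

Definition mutually_independent (dO dT : measure_display) (R : realType)
  (Om : measurableType dO) (T : measurableType dT) (P : probability Om R)
  (n : nat) (Z : 'I_n -> Om -> T) : Prop :=
  forall A : 'I_n -> set T, (forall i, measurable (A i)) ->
    P (\bigcap_(i in [set: 'I_n]) (Z i @^-1` A i)) =
    (\prod_(i < n) P (Z i @^-1` A i))%E.

Definition disagree (R : ringType) (d k : nat) (T : Type) (feat : T -> 'cV[R]_d)
  (M : 'M[R]_d) (W WM : 'M[R]_(d, k)) : set T :=
  [set z | WM^T *m (M *m feat z) != W^T *m feat z].

(* Main.v *)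
Require Import Defs.
From HB Require Import structures.
From mathcomp Require Import all_boot all_order all_algebra.
From mathcomp Require Import all_classical all_reals all_analysis.
From mathcomp Require Import measurable_realfun measurable_fun_approximation.
Import Order.TTheory GRing.Theory Num.Theory.
Local Open Scope ring_scope.
Local Open Scope classical_set_scope.

Module Aux.
Set Implicit Arguments. Unset Strict Implicit. Unset Printing Implicit Defensive.


Lemma rank_minor (F : fieldType) n p (A : 'M[F]_(n,p)) :
  exists f : 'I_(\rank A) -> 'I_n, exists g : 'I_(\rank A) -> 'I_p,
    \det (mxsub f g A) != 0.
Proof.
set B := rowsub (maxrankfun A) A.
have fB : row_free B := maxrowsub_free A.
have rB : row_full B^T by rewrite /row_full mxrank_tr.
exists (maxrankfun A), (fullrankfun rB).
have -> : mxsub (maxrankfun A) (fullrankfun rB) A = (rowsub (fullrankfun rB) B^T)^T.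
  by apply/matrixP => i j; rewrite !mxE.
by rewrite det_tr -unitfE -unitmxE fullrowsub_unit.
Qed.

Lemma minor_rank (F : fieldType) n p s (A : 'M[F]_(n,p)) (f : 'I_s -> 'I_n)
  (g : 'I_s -> 'I_p) : \det (mxsub f g A) != 0 -> (s <= \rank A)%N.
Proof.
rewrite -unitfE -unitmxE => /mxrank_unit <-.
have -> : mxsub f g A = rowsub f ((rowsub g A^T)^T).
  by apply/matrixP => i j; rewrite !mxE.
have := mxrankS (rowsub_sub f ((rowsub g A^T)^T)); move/leq_trans; apply.
by rewrite mxrank_tr -[X in (_ <= X)%N]mxrank_tr; apply/mxrankS/rowsub_sub.
Qed.

Lemma measurable_rank_ge d' (X : measurableType d') (R : realType) n p
  (F : X -> 'M[R]_(n,p)) : (forall i j, measurable_fun setT (fun x => F x i j)) ->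
  forall r, measurable [set x | (r <= \rank (F x))%N].
Proof.
move=> mF r.
have mdet s (f : 'I_s -> 'I_n) (g : 'I_s -> 'I_p) :
    measurable [set x | \det (mxsub f g (F x)) != 0].
  have md : measurable_fun setT (fun x => \det (mxsub f g (F x))).
    rewrite /determinant; apply: measurable_sum => σ.
    apply: measurable_funM; first exact: measurable_cst.
    apply: measurable_prod => i _.
    by under eq_fun do rewrite mxE; apply: mF.
  have -> : [set x | \det (mxsub f g (F x)) != 0] =
      (fun x => \det (mxsub f g (F x))) @^-1` (~` [set 0]).
    by apply/seteqP; split => x /=; move/eqP.
  by have := md measurableT _ (measurableC (measurable_set1 0)); rewrite setTI.
have -> : [set x | (r <= \rank (F x))%N] =
    \bigcup_(s in [set s : 'I_n.+1 | (r <= s)%N])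
      \bigcup_(f in [set: {ffun 'I_s -> 'I_n}])
        \bigcup_(g in [set: {ffun 'I_s -> 'I_p}])
          [set x | \det (mxsub f g (F x)) != 0].
  apply/seteqP; split => x /=.
    move=> hr; have [f [g hfg]] := rank_minor (F x).
    have hs : (\rank (F x) < n.+1)%N by rewrite ltnS rank_leq_row.
    exists (Ordinal hs) => //; exists (finfun f) => //; exists (finfun g) => //=.
    by rewrite (_ : mxsub _ _ _ = mxsub f g (F x)) //; apply/matrixP => i j; rewrite !mxE !ffunE.
  move=> [s /= hs [f _ [g _ /= h]]].
  exact: leq_trans hs (minor_rank h).
apply: fin_bigcup_measurable; first exact: finite_finset.
move=> s _; apply: fin_bigcup_measurable; first exact: finite_finset.
move=> f _; apply: fin_bigcup_measurable; first exact: finite_finset.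
by move=> g _; apply: mdet.
Qed.



Section indep.
Context (R : realType) (dT : measure_display) (T : measurableType dT)
  (mu : probability T R) (dO : measure_display) (Om : measurableType dO)
  (P : probability Om R) (m : nat) (Z : 'I_m -> Om -> T)
  (hZmeas : forall i, measurable_fun setT (Z i))
  (hZlaw : forall i (A : set T), measurable A -> P (Z i @^-1` A) = mu A)
  (hZind : mutually_independent P Z).

Definition Yp t (ht : (t <= m)%N) (om : Om) : t.-tuple T :=
  [tuple Z (widen_ord ht i) om | i < t].

Lemma measurable_Yp t (ht : (t <= m)%N) : measurable_fun setT (Yp ht).
Proof.
apply/measurable_fun_tnthP => i.
rewrite (_ : _ \o _ = Z (widen_ord ht i)); first exact: hZmeas.
by apply/funext => om /=; rewrite tnth_mktuple.
Qed.

Definition cyl t (Ai : 'I_t -> set T) : set (t.-tuple T) :=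
  \bigcap_(i in [set: 'I_t]) ((fun y => tnth y i) @^-1` Ai i).

Lemma measurable_cyl t (Ai : 'I_t -> set T) :
  (forall i, measurable (Ai i)) -> measurable (cyl Ai).
Proof.
move=> mA; apply: fin_bigcap_measurable; first exact: finite_finset.
move=> i _; have := measurable_tnth i measurableT (mA i).
by rewrite setTI.
Qed.

Lemma indep_cyl t (htm : (t < m)%N) (A : set T) (Ai : 'I_t -> set T) :
  measurable A -> (forall i, measurable (Ai i)) ->
  P (Yp (ltnW htm) @^-1` cyl Ai `&` Z (Ordinal htm) @^-1` A) =
  (mu A * P (Yp (ltnW htm) @^-1` cyl Ai))%E.
Proof.
move=> mA mAi.
set j0 := Ordinal htm.
pose A' (b : bool) (j : 'I_m) : set T :=
  match @insub nat (fun k => (k < t)%N) 'I_t (val j) with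
  | Some i => Ai i | None => if b && (j == j0) then A else setT end.
have mA' b j : measurable (A' b j).
  rewrite /A'; case: insub => [i|]; first exact: mAi.
  by case: ifP.
have A'w b (i : 'I_t) : A' b (widen_ord (ltnW htm) i) = Ai i.
  rewrite /A' /= insubT; first exact: ltn_ord.
  by move=> h; congr Ai; apply: val_inj.
have A'j0 b : A' b j0 = if b then A else setT.
  rewrite /A' /= insubN ?ltnn //; by case: b; rewrite ?eqxx.
have A'o j : j != j0 -> A' true j = A' false j.
  by move=> hj; rewrite /A'; case: insub => // ; rewrite (negbTE hj).
have capE b : \bigcap_(j in [set: 'I_m]) (Z j @^-1` A' b j) =
    Yp (ltnW htm) @^-1` cyl Ai `&` (if b then Z j0 @^-1` A else setT).
  apply/seteqP; split => om /=.
    move=> h; split.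
      move=> i _ /=; rewrite tnth_mktuple -(A'w b); exact: h.
    by case: b h => h //; have := h j0 I; rewrite A'j0.
  move=> [hc hb] j _ /=.
  rewrite /A'; case: insubP => [i _ hij|hjt].
    have := hc i I; rewrite /= tnth_mktuple.
    by rewrite (_ : widen_ord _ i = j) //; apply: val_inj.
  case: ifP => // /andP[hbb /eqP ->].
  by move: hb; rewrite hbb.
have prodE b : P (\bigcap_(j in [set: 'I_m]) (Z j @^-1` A' b j)) =
    (mu (A' b j0) * \prod_(j < m | j != j0) mu (A' false j))%E.
  rewrite hZind //.
  rewrite (bigD1 j0) //= hZlaw //; congr (_ * _)%E.
  apply: eq_bigr => j hj; rewrite hZlaw //.
  by case: b => //; rewrite A'o.
have := prodE true; rewrite capE A'j0 => ->.
have := prodE false; rewrite capE A'j0 setIT => ->.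
by rewrite probability_setT mul1e.
Qed.


Lemma indep1 t (htm : (t < m)%N) (A : set T) (B : set (t.-tuple T)) :
  measurable A -> measurable B ->
  P (Yp (ltnW htm) @^-1` B `&` Z (Ordinal htm) @^-1` A) =
  (mu A * P (Yp (ltnW htm) @^-1` B))%E.
Proof.
move=> mA mB.
set Y := Yp (ltnW htm).
pose Yf : {mfun Om >-> t.-tuple T} :=
  HB.pack Y (isMeasurableFun.Build _ _ _ _ Y (measurable_Yp (ltnW htm))).
have mZA : measurable (Z (Ordinal htm) @^-1` A).
  by rewrite -[X in measurable X]setTI; apply: hZmeas.
pose m1 := pushforward (mrestr P mZA) Yf.
pose r : {nonneg R} := NngNum (fine_ge0 (measure_ge0 mu A)).
pose m2 := mscale r (distribution P Yf).
pose G := [set B : set (t.-tuple T) | exists Ai : 'I_t -> set T,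
  (forall i, measurable (Ai i)) /\ B = cyl Ai].
have mG : measurable = <<s G >>.
  apply/seteqP; split; last first.
    apply: smallest_sub; first exact: sigma_algebra_measurable.
    by move=> _ [Ai [mAi ->]]; exact: measurable_cyl.
  have -> : @measurable _ (t.-tuple T) =
    g_sigma_preimage (fun i (x : t.-tuple T) => tnth x i) by [].
  rewrite /g_sigma_preimage.
  apply: smallest_sub; first exact: smallest_sigma_algebra.
  move=> X hX; apply: sub_sigma_algebra; move: X hX.
  elim/big_ind: _ => //.
    by move=> X1 X2 h1 h2 X [/h1|/h2].
  move=> i _ _ [B' mB' <-].
  exists (fun j => if j == i then B' else setT); split.
    by move=> j; case: ifP.
  apply/seteqP; split => y /=.
    by move=> [_ hy] j _ /=; case: ifP => // /eqP ->.
  by move=> h; split => //; have := h i I; rewrite /= eqxx.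
have m1m2 : forall B, G B -> m1 B = m2 B.
  move=> _ [Ai [mAi ->]].
  rewrite /m1 /m2 /= /mscale /pushforward /mrestr /=.
  rewrite (indep_cyl htm mA mAi) /= fineK //.
  exact: fin_num_measure.
have := @measure_unique _ _ _ G (fun=> setT) mG _ _ _ m1 m2 m1m2 _ B mB.
move=> H; rewrite -[mu A]fineK ?fin_num_measure //; apply: H.
- move=> _ _ [A1 [mA1 ->]] [A2 [mA2 ->]].
  exists (fun i => A1 i `&` A2 i); split; first by move=> i; exact: measurableI.
  apply/seteqP; split => y /=.
    by move=> [h1 h2] i _; split; [exact: h1|exact: h2].
  by move=> h; split => i _; have [] := h i I.
- move=> _; exists (fun=> setT); split => //.
  by apply/seteqP; split => y.
- by apply/seteqP; split => // y _; exists 0%N.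
- move=> _; rewrite /m1 /pushforward /mrestr /=.
  apply: (le_lt_trans (probability_le1 _ _)) => //.
  apply: measurableI => //; rewrite -[X in measurable X]setTI.
  exact: measurable_Yp.
exact: ltry.
Qed.


Lemma indep2 t (htm : (t < m)%N) (C : set (T * t.-tuple T)) : measurable C ->
  P ((fun om => (Z (Ordinal htm) om, Yp (ltnW htm) om)) @^-1` C) =
  (\int[P]_om mu (ysection C (Yp (ltnW htm) om)))%E.
Proof.
move=> mC.
set Y := Yp (ltnW htm).
pose Yf : {mfun Om >-> t.-tuple T} :=
  HB.pack Y (isMeasurableFun.Build _ _ _ _ Y (measurable_Yp (ltnW htm))).
pose pf := fun om => (Z (Ordinal htm) om, Y om).
have mpf : measurable_fun setT pf.
  by apply: measurable_fun_pair; [exact: hZmeas|exact: measurable_Yp].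
pose pff : {mfun Om >-> (T * t.-tuple T)%type} :=
  HB.pack pf (isMeasurableFun.Build _ _ _ _ pf mpf).
have H : forall A B, measurable A -> measurable B ->
    distribution P pff (A `*` B) = (mu A * distribution P Yf B)%E.
  move=> A B mA mB; rewrite /distribution /pushforward /=.
  rewrite -(indep1 htm mA mB); congr (P _).
  by apply/seteqP; split => om /= [].
have E1 := product_measure_unique H mC.
transitivity (distribution P pff C) => //.
rewrite -E1 /product_measure1.
rewrite -(indic_fubini_tonelli_FE _ mC) (indic_fubini_tonelli _ _ mC).
rewrite (indic_fubini_tonelli_GE _ mC).
rewrite ge0_integral_distribution //.
  exact: measurable_fun_ysection.
Qed.

End indep.



Lemma notsub_rank (F : fieldType) n k (A : 'M[F]_(k,n)) (v : 'rV_n) :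
  ~~ (v <= A)%MS = (\rank A < \rank (col_mx A v))%N.
Proof.
have <- : \rank (A + v)%MS = \rank (col_mx A v) by rewrite addsmxE.
rewrite (ltn_leqif (mxrank_leqif_sup (addsmxSl A v))).
by rewrite addsmx_sub submx_refl.
Qed.

Section linalg.
Context (R : realType) (d : nat) (dT : measure_display) (T : measurableType dT)
  (feat : T -> 'cV[R]_d)
  (hfeat : forall i : 'I_d, measurable_fun setT (fun z => feat z i ord0)).

Definition Vmx t (y : t.-tuple T) : 'M[R]_(t, d) :=
  \matrix_(i, j) feat (tnth y i) j ord0.

Definition Cset t : set (T * t.-tuple T) :=
  [set p | ~~ ((feat p.1)^T <= Vmx p.2)%MS].
Arguments Cset : clear implicits.

Lemma measurable_Cset t : measurable (Cset t).
Proof.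
have mV i j : measurable_fun setT (fun p : T * t.-tuple T => Vmx p.2 i j).
  under eq_fun do rewrite mxE.
  apply: (measurableT_comp (hfeat j)).
  exact: (measurableT_comp (measurable_tnth i) measurable_snd).
have mW i j : measurable_fun setT
    (fun p : T * t.-tuple T => col_mx (Vmx p.2) (feat p.1)^T i j).
  under eq_fun do rewrite mxE.
  case: (fintype.split i) => k /=; first exact: mV.
  have -> : k = ord0 by apply/val_inj; case: k => [[]].
  under eq_fun do rewrite mxE.
  exact: (measurableT_comp (hfeat j) measurable_fst).
have -> : Cset t = \bigcup_(r in [set: nat])
   ([set p | (r <= \rank (col_mx (Vmx p.2) (feat p.1)^T))%N] `&`
    ~` [set p | (r <= \rank (Vmx p.2))%N]).
  apply/seteqP; split => p /=.
    rewrite /Cset /= notsub_rank => h.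
    by exists (\rank (col_mx (Vmx p.2) (feat p.1)^T)) => //=; split => //; apply/negP; rewrite -ltnNge.
  move=> [r _ [h1 /negP h2]]; rewrite /Cset /= notsub_rank.
  by rewrite -ltnNge in h2; apply: leq_trans h2 h1.
apply: bigcupT_measurable => r; apply: measurableI.
  exact: measurable_rank_ge mW r.
apply: measurableC; exact: measurable_rank_ge mV r.
Qed.

End linalg.



Section seqarg.
Context (R : realType) (d : nat) (dT : measure_display) (T : measurableType dT)
  (feat : T -> 'cV[R]_d) (dO : measure_display) (Om : measurableType dO)
  (m : nat) (Z : 'I_m -> Om -> T).

Local Notation V ht om := (Vmx feat (Yp Z ht om)).

Lemma Yp_irr t (h1 h2 : (t <= m)%N) : Yp Z h1 = Yp Z h2.
Proof. by rewrite (bool_irrelevance h1 h2). Qed.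

Lemma V_mono t s (ht : (t <= m)%N) (hs : (s <= m)%N) om : (t <= s)%N ->
  (V ht om <= V hs om)%MS.
Proof.
move=> hts; apply/row_subP => i.
apply: (eq_row_sub (widen_ord hts i)); apply/rowP => j.
rewrite !mxE !tnth_mktuple; congr (feat (Z _ om) j ord0).
exact: val_inj.
Qed.

Lemma V_new t (htm : (t < m)%N) om :
  ((feat (Z (Ordinal htm) om))^T <= V htm om)%MS.
Proof.
apply: (eq_row_sub (Ordinal (ltnSn t))); apply/rowP => j.
rewrite !mxE !tnth_mktuple; congr (feat (Z _ om) j ord0).
exact: val_inj.
Qed.

Definition bnew (t : 'I_m) om : bool :=
  ~~ ((feat (Z t om))^T <= V (ltnW (ltn_ord t)) om)%MS.

Lemma count_rank om s (hs : (s <= m)%N) :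
  (\sum_(t < m | (t < s)%N) bnew t om <= \rank (V hs om))%N.
Proof.
elim: s hs => [|s IH] hs.
  by rewrite big_pred0.
have hsm : (s < m)%N := hs.
rewrite (bigD1 (Ordinal hsm)) //=.
rewrite (eq_bigl (fun t : 'I_m => (t < s)%N)); last first.
  by move=> t; rewrite ltnS leq_eqVlt -(inj_eq val_inj) /=; case: ltngtP.
have IHs := IH (ltnW hsm).
rewrite /bnew /= (Yp_irr (ltnW (ltn_ord (Ordinal hsm))) (ltnW hsm)).
set x := (feat (Z (Ordinal hsm) om))^T.
have sub1 := V_mono (ltnW hsm) hs om (leqnSn s).
case: (boolP (x <= V (ltnW hsm) om)%MS) => hx /=.
  by rewrite add0n (leq_trans IHs) // mxrankS.
rewrite add1n; apply: leq_ltn_trans IHs _.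
apply: rank_ltmx; rewrite ltmxE sub1 /=.
apply: contra hx => h; apply: submx_trans h.
by rewrite (Yp_irr hs hsm); exact: V_new.
Qed.


Lemma row_V om (i : 'I_m) : row i (V (leqnn m) om) = (feat (Z i om))^T.
Proof.
apply/rowP => j; rewrite !mxE tnth_mktuple; congr (feat (Z _ om) j ord0).
exact: val_inj.
Qed.

Lemma span_agree k (W WM : 'M[R]_(d, k)) (M : 'M[R]_d) om (v : 'cV[R]_d) :
  (forall i : 'I_m, WM^T *m (M *m feat (Z i om)) = W^T *m feat (Z i om)) ->
  (v^T <= V (leqnn m) om)%MS -> WM^T *m (M *m v) = W^T *m v.
Proof.
move=> h /submxP [D hD].
set N := WM^T *m M - W^T.
have hN i : N *m feat (Z i om) = 0 by rewrite mulmxBl -mulmxA h subrr.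
have hV : V (leqnn m) om *m N^T = 0.
  apply/row_matrixP => i; rewrite row_mul row0 row_V -trmx_mul hN.
  by rewrite trmx0.
have hv : v = (V (leqnn m) om)^T *m D^T by rewrite -trmx_mul -hD trmxK.
apply/eqP; rewrite -subr_eq0 mulmxA -mulmxBl -/N hv mulmxA.
by rewrite -(trmxK N) -trmx_mul hV trmx0 mul0mx.
Qed.

End seqarg.

Lemma measurable_disagree (R : realType) (d : nat) (dT : measure_display)
  (T : measurableType dT) (feat : T -> 'cV[R]_d)
  (hfeat : forall i : 'I_d, measurable_fun setT (fun z => feat z i ord0))
  k (M : 'M[R]_d) (W WM : 'M[R]_(d, k)) :
  measurable (disagree feat M W WM).
Proof.
set N := WM^T *m M - W^T.
have -> : disagree feat M W WM = [set z | (1 <= \rank (N *m feat z))%N].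
  apply/seteqP; split => z /=; rewrite lt0n mxrank_eq0 mulmxBl -mulmxA subr_eq0 //.
apply: measurable_rank_ge => i j.
have -> : j = ord0 by apply/val_inj; case: j => [[]].
under eq_fun do rewrite mxE.
apply: measurable_sum => l; apply: measurable_funM; first exact: measurable_cst.
exact: hfeat.
Qed.

End Aux.
Import Aux.
Unset Implicit Arguments.

Theorem lemma1 (R : realType) (d m : nat)
  (dT : measure_display) (T : measurableType dT) (Y : Type)
  (feat : T -> 'cV[R]_d) (lab : T -> Y)
  (hfeat : forall i : 'I_d, measurable_fun setT (fun z => feat z i ord0))
  (mu : probability T R)
  (dO : measure_display) (Om : measurableType dO) (P : probability Om R)
  (Z : 'I_m -> Om -> T)
  (hZmeas : forall i, measurable_fun setT (Z i))
  (hZlaw : forall i (A : set T), measurable A -> P (Z i @^-1` A) = mu A)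
  (hZind : mutually_independent P Z)
  (delta : R) (hdelta : 0 < delta < 1) :
  exists E : set Om, measurable E /\ ((1 - delta)%:E <= P E)%E /\
    forall om, E om ->
      let S := [seq (feat (Z i om), lab (Z i om)) | i <- enum 'I_m] in
      forall (k : nat) (Xi Out : Type) (A : algorithm R d k Y Xi Out)
             (M : 'M[R]_d) (xi : Xi),
        ((linearly_invariant A /\ M \in unitmx) \/
         (orthogonally_invariant A /\ orthogonal_mx M)) ->
        (mu (disagree feat M (A xi S).2 (A xi (transform_data M S)).2)
          <= (d%:R / (delta * m.+1%:R))%:E)%E.
Proof.
move: hdelta => /andP[d0 d1].
set c := d%:R / (delta * m.+1%:R).
have c0 : 0 <= c by apply: divr_ge0; [exact: ler0n|apply: mulr_ge0; [exact: ltW|exact: ler0n]].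
pose Ym := Yp Z (leqnn m).
pose C := Cset feat (t:=m).
have mC : measurable C := @measurable_Cset _ _ _ _ feat hfeat m.
pose q om := mu (ysection C (Ym om)).
have mq : measurable_fun setT q.
  exact: (measurableT_comp (measurable_fun_ysection mu mC) (measurable_Yp hZmeas (leqnn m))).
have q0 om : (0 <= q om)%E by apply: measure_ge0.
have q1 om : (q om <= 1)%E by apply: probability_le1; exact: measurable_ysection.
pose E := [set om | (q om <= c%:E)%E].
have mE : measurable E.
  by have := measurable_lee measurableT mq (measurable_cst c%:E); rewrite setTI.
exists E; split => //; split; last first.
  move=> om hE S k Xi Out A M xi hA.
  have hinv : invariant_for A M by case: hA => [[h hM]|[h hM]]; apply: h.
  have [_ h2] := hinv xi S.
  apply: (le_trans _ hE).
  apply: le_measure; rewrite ?inE.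
  - exact: measurable_disagree.
  - exact: measurable_ysection.
  move=> z /= hz; rewrite /ysection /= in_setE /C /Cset /=.
  apply/negP => hsub; move/negP: hz; apply; apply/eqP.
  apply: (span_agree _ hsub) => i; apply: h2.
  by rewrite /S -map_comp; apply: map_f; rewrite mem_enum.
pose Yt (t : 'I_m) := Yp Z (ltnW (ltn_ord t)).
pose Ct (t : 'I_m) := Cset feat (t:=t).
have mCt t : measurable (Ct t) := @measurable_Cset _ _ _ _ feat hfeat t.
pose qt (t : 'I_m) om := mu (ysection (Ct t) (Yt t om)).
have mqt t : measurable_fun setT (qt t).
  exact: (measurableT_comp (measurable_fun_ysection mu (mCt t)) (measurable_Yp hZmeas _)).
have qt0 t om : (0 <= qt t om)%E by apply: measure_ge0.
pose Bt (t : 'I_m) := (fun om => (Z t om, Yt t om)) @^-1` Ct t.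
have mBt t : measurable (Bt t).
  rewrite -[X in measurable X]setTI.
  by have := (measurable_fun_pair (hZmeas t) (measurable_Yp hZmeas (ltnW (ltn_ord t)))) measurableT _ (mCt t); rewrite setTI.
have mIt t : measurable_fun setT (fun om => (\1_(Bt t) om)%:E : \bar R).
  by apply/measurable_EFinP; exact: measurable_indic.
have It0 t om : (0%E <= ((\1_(Bt t) om)%:E : \bar R))%E by rewrite lee_fin.
have hB t om : (\1_(Bt t) om : R) = (bnew feat Z t om)%:R.
  have e : (om \in Bt t) = bnew feat Z t om by apply/idP/idP; rewrite in_setE.
  by rewrite indicE e.
have int_a t : (\int[P]_om (\1_(Bt t) om)%:E = \int[P]_om qt t om)%E.
  rewrite integral_indic // setIT.
  have := indep2 hZmeas hZlaw hZind (ltn_ord t) (mCt t).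
  have eqt : Ordinal (ltn_ord t) = t by apply: val_inj.
  by rewrite eqt.
have mono t om : (q om <= qt t om)%E.
  apply: le_measure; rewrite ?inE; [exact: (measurable_ysection _ mC)|exact: (measurable_ysection _ (mCt t))|].
  move=> z; rewrite /ysection /= !in_setE /C /Ct /Cset /=.
  apply: contra => h; apply: submx_trans h _.
  by apply: V_mono; exact: ltnW.
have pw om : ((\sum_(t < m) (\1_(Bt t) om)%:E) + q om <= d%:R%:E)%E.
  under eq_bigr do rewrite hB.
  rewrite sumEFin -natr_sum.
  set n := (\sum_(t < m) bnew feat Z t om)%N.
  have hn : n = (\sum_(t < m | (t < m)%N) bnew feat Z t om)%N.
    by apply: eq_bigl => t; rewrite ltn_ord.
  have hc : (n <= \rank (Vmx feat (Ym om)))%N.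
    by rewrite hn; exact: count_rank.
  have hr := rank_leq_col (Vmx feat (Ym om)).
  case: (ltnP (\rank (Vmx feat (Ym om))) d) => hrd.
    apply: le_trans (leeD2l _ (q1 om)) _.
    rewrite -EFinD lee_fin -(natrD R n 1) ler_nat addn1.
    exact: leq_ltn_trans hc hrd.
  have hfull : row_full (Vmx feat (Ym om)) by rewrite /row_full eqn_leq hr hrd.
  have -> : q om = 0%E.
    rewrite /q (_ : ysection C (Ym om) = set0) ?measure0 //.
    apply/seteqP; split => z //=; rewrite /ysection /= in_setE /C /Cset /=.
    by rewrite submx_full.
  rewrite adde0 lee_fin ler_nat; exact: leq_trans hc hr.
pose I := (\int[P]_om q om)%E.
have step1 : (\sum_(t < m) I + I <= d%:R%:E)%E.
  apply: (@le_trans _ _ (\sum_(t < m) (\int[P]_om qt t om) + I)%E).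
    apply: leeD2r; apply: lee_sum => t _.
    apply: ge0_le_integral => //.
  under eq_bigr do rewrite -int_a.
  rewrite -ge0_integral_sum //.
  have mS : measurable_fun setT
      (fun om => \sum_(t < m) ((\1_(Bt t) om)%:E : \bar R)).
    exact: emeasurable_sum.
  have S0 om : (0%E <= \sum_(t < m) ((\1_(Bt t) om)%:E : \bar R))%E.
    by apply: sume_ge0.
  rewrite -ge0_integralD //.
  apply: (@le_trans _ _ (\int[P]_om (cst (d%:R%:E) om))%E).
    apply: ge0_le_integral => //.
    - by move=> om _; apply: adde_ge0.
    - exact: emeasurable_funD.
  have := integral_cst P measurableT (d%:R%:E).
  move=> ->; rewrite -[leRHS]mule1; apply: lee_wpmul2l; first by rewrite lee_fin ler0n.
  exact: probability_le1.
have I0 : (0 <= I)%E by apply: integral_ge0 => om _; exact: q0.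
have Ifin : I \is a fin_num.
  rewrite ge0_fin_numE //; apply: (le_lt_trans _ (ltry (d%:R))).
  apply: le_trans step1; apply: leeDr.
  by apply: sume_ge0.
set x := fine I.
have Ix : I = x%:E by rewrite /x fineK.
have mk : (c%:E * P (~` E) <= I)%E.
  have mCE : measurable (~` E) := measurableC mE.
  rewrite -(setIT (~` E)) -integral_indic //.
  rewrite -ge0_integralZl //; last first.
    by apply/measurable_EFinP; exact: measurable_indic.
  - apply: ge0_le_integral => //.
    + by move=> om _; apply: mule_ge0; rewrite lee_fin.
    + apply: measurable_funeM; apply/measurable_EFinP; exact: measurable_indic.
    move=> om _; rewrite indicE; case: (boolP (om \in ~` E)) => h /=.
      rewrite mule1; move: h; rewrite in_setE /E /= => h.
      have : ~~ (q om <= c%:E)%E by apply/negP.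
      by rewrite -ltNge => /ltW.
    by rewrite mule0; exact: q0.
have PCE : P (~` E) = (fine (P (~` E)))%:E.
  by rewrite fineK //; apply: fin_num_measure; exact: measurableC.
set p := fine (P (~` E)).
have PE : P E = (1 - p)%:E.
  have := probability_setC P (measurableC mE); rewrite setCK => ->.
  by rewrite PCE EFinB.
rewrite PE lee_fin lerD2l lerN2.
have [hd0|dpos] := eqVneq d 0%N.
  have Ce : ~` E = set0.
    apply/seteqP; split => om //= h; apply: h; rewrite /E /= /c hd0 mul0r.
    have h' := pw om; rewrite hd0 in h'; apply: (le_trans _ h').
    by apply: leeDr; apply: sume_ge0.
  by rewrite /p Ce measure0 /=; exact: ltW.
have h1 : x *+ m + x <= d%:R.
  by move: step1; rewrite Ix sumEFin -EFinD lee_fin sumr_const card_ord.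
have hcp : c * p <= x.
  by move: mk; rewrite PCE Ix -EFinM lee_fin.
have key : d%:R / delta * p <= d%:R.
  have e : d%:R / delta = c * m.+1%:R.
    by rewrite /c invfM mulrA divfK // pnatr_eq0.
  rewrite e mulrAC; apply: le_trans h1.
  have -> : x *+ m + x = x * m.+1%:R by rewrite mulr_natr mulrSr.
  by apply: ler_wpM2r => //; exact: ler0n.
have dp : d%:R * p <= d%:R * delta.
  have -> : d%:R * p = delta * (d%:R / delta * p).
    by rewrite mulrA [delta * _]mulrC divfK //; exact: lt0r_neq0.
  rewrite [d%:R * delta]mulrC; by apply: ler_wpM2l => //; exact: ltW.
by rewrite ler_pM2l ?ltr0n ?lt0n // in dp.
Qed.
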